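(* Let $\mathcal M=(N,\mathcal I)$ be a matroid, let $h\ge1$ be an integer, let $\mathcal M_h=(N,\mathcal I_h)$ be its $h$-fold union with rank function $r_h$. Let $Q\subseteq N$ and $e\in N\setminus Q$ satisfy $r_h(Q\cup\{e\})=r_h(Q)$. Then $e\in\mathrm{span}(D(Q,h))$.
   Context: The $h$-fold union $\mathcal M_h$ is the matroid on $N$ whose independent sets are the unions of $h$ independent sets of $\mathcal M$. $r$ is the rank function of $\mathcal M$, $\mathrm{span}(A)=\{f\in N: r(A\cup\{f\})=r(A)\}$, and $D(Q,\lambda)$ is the unique inclusion-wise maximal set among the maximizers of $|U|-\lambda r(U)$ over $U\subseteq Q$. *)

(* Defs.v *)
From mathcomp Require Import all_boot all_order all_algebra.
Set Implicit Arguments. Unset Strict Implicit. Unset Printing Implicit Defensive.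
Import GRing.Theory Num.Theory.

Section Matroids.
Variable N : finType.

Definition is_matroid (indep : pred {set N}) : Prop :=
  [/\ indep set0,
      (forall A B : {set N}, B \subset A -> indep A -> indep B) &
      (forall A B : {set N}, indep A -> indep B -> #|A| < #|B| ->
          exists2 x, x \in B :\: A & indep (x |: A))].

Definition mrank (indep : pred {set N}) (A : {set N}) : nat :=
  \max_(B : {set N} | (B \subset A) && indep B) #|B|.

Definition mspan (indep : pred {set N}) (A : {set N}) : {set N} :=
  [set f | mrank indep (f |: A) == mrank indep A].

Definition union_indep (h : nat) (indep : pred {set N}) : pred {set N} :=
  fun I => [exists F : {ffun 'I_h -> {set N}},
              [forall i, indep (F i)] && (I == \bigcup_(i < h) F i)].

Definition Dobj (indep : pred {set N}) (lam : nat) (U : {set N}) : int :=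
  (#|U|%:Z - (lam%:Z * (mrank indep U)%:Z))%R.

Definition is_D (indep : pred {set N}) (Q : {set N}) (lam : nat) (D : {set N}) : Prop :=
  [/\ D \subset Q,
      (forall U : {set N}, U \subset Q -> (Dobj indep lam U <= Dobj indep lam D)%R) &
      (forall U : {set N}, U \subset Q -> Dobj indep lam U = Dobj indep lam D ->
          D \subset U -> U = D)].

End Matroids.

(* Main.v *)
Set Warnings "-notation-overridden,-ambiguous-paths".
Require Import Defs.
From mathcomp Require Import all_boot all_order all_algebra.
From mathcomp Require Import zify.
Set Implicit Arguments. Unset Strict Implicit. Unset Printing Implicit Defensive.

Section Rank.
Variable T : finType.
Definition rank_fun (r : {set T} -> nat) : Prop :=
  [/\ r set0 = 0, (forall (A : {set T}) x, r (x |: A) <= (r A).+1),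
      (forall A B : {set T}, A \subset B -> r A <= r B) &
      (forall A B : {set T}, r (A :|: B) + r (A :&: B) <= r A + r B)].

Lemma contr_rank (r : {set T} -> nat) e : rank_fun r ->
  rank_fun (fun A => r (e |: A) - r [set e]).
Proof.
case=> R0 R1 R2 R3.
have Me A : r [set e] <= r (e |: A) by apply: R2; rewrite sub1set setU11.
split.
- by rewrite setU0 subnn.
- move=> A x.
  have -> : e |: (x |: A) = x |: (e |: A) by rewrite setUCA.
  have := R1 (e |: A) x; have := Me A; lia.
- move=> A B sAB; apply: leq_sub2r; apply: R2; exact: setUS.
- move=> A B.
  have := R3 (e |: A) (e |: B).
  have -> : (e |: A) :|: (e |: B) = e |: (A :|: B).
    by apply/setP=> x; rewrite !inE; case: (x == e); case: (x \in A); case: (x \in B).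
  have -> : (e |: A) :&: (e |: B) = e |: (A :&: B).
    by apply/setP=> x; rewrite !inE; case: (x == e); case: (x \in A); case: (x \in B).
  have := Me A; have := Me B; have := Me (A :|: B); have := Me (A :&: B); lia.
Qed.

Lemma rank_single (r : {set T} -> nat) e : rank_fun r -> r [set e] <= 1.
Proof. case=> R0 R1 _ _; have := R1 set0 e; rewrite setU0 R0; done. Qed.

Lemma arith1 (x1 x2 y1 y2 ad dd ac dc kd kc m : nat) :
  y1 + x1 <= ad + ac -> x2 + y2 <= dd + dc -> ad + dd <= kd ->
  ac - 1 + (dc - 1) <= kc -> 0 < ac -> 0 < dc -> kd <= m -> kc.+1 <= m ->
  m < x1 + x2 -> y1 + y2 <= m.
Proof. lia. Qed.

Theorem inter_thm n : forall (E : {set T}) r1 r2, #|E| = n -> rank_fun r1 -> rank_fun r2 ->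
  exists I A : {set T}, [/\ I \subset E, A \subset E, r1 I = #|I|, r2 I = #|I| &
     r1 A + r2 (E :\: A) <= #|I|].
Proof.
elim: n => [|n IH] E r1 r2 cE Hr1 Hr2.
  move/eqP: cE; rewrite cards_eq0 => /eqP ->.
  exists set0, set0; case: Hr1 => R0 _ _ _; case: Hr2 => R0' _ _ _.
  by rewrite sub0set setD0 R0 R0' cards0.
have [e eE] : exists e, e \in E by apply/card_gt0P; rewrite cE.
set E' := E :\ e.
have cE' : #|E'| = n by move: cE; rewrite (cardsD1 e) eE => -[].
have sE' : E' \subset E by apply: subsetDl.
have eE' : e \notin E' by rewrite !inE eqxx.
have [Id [Ad [sId sAd r1Id r2Id bd]]] := IH E' r1 r2 cE' Hr1 Hr2.
have sAdE := subset_trans sAd sE'.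
have eAd : e \notin Ad by apply/negP => /(subsetP sAd); rewrite (negbTE eE').
have := rank_single e Hr1; have := rank_single e Hr2.
case: Hr1 => R10 R11 R12 R13; case: Hr2 => R20 R21 R22 R23.
move=> H2s H1s.
case E1: (r1 [set e]) H1s => [|[|//]] _.
  exists Id, (e |: Ad); split => //.
  - exact: subset_trans sId sE'.
  - by rewrite subUset sub1set eE.
  - have := R13 [set e] Ad; rewrite E1 add0n.
    have -> : E :\: (e |: Ad) = E' :\: Ad by rewrite /E' setDDl.
    lia.
case E2: (r2 [set e]) H2s => [|[|//]] _.
  exists Id, Ad; split => //.
  - exact: subset_trans sId sE'.
  have := R23 [set e] (E' :\: Ad); rewrite E2 add0n.
  have -> : [set e] :|: (E' :\: Ad) = E :\: Ad.
    apply/setP => x; rewrite !inE; have := subsetP sAd x; rewrite !inE.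
    case: (eqVneq x e) => [->|_] /=; first by rewrite eE (negbTE eAd).
    by case: (x \in Ad); case: (x \in E).
  lia.
have Hc1 := contr_rank e (And4 R10 R11 R12 R13).
have Hc2 := contr_rank e (And4 R20 R21 R22 R23).
have [Ic [Ac [sIc sAc c1Ic c2Ic bc]]] := IH E' _ _ cE' Hc1 Hc2.
rewrite E1 E2 in c1Ic c2Ic bc.
have eIc : e \notin Ic by apply/negP => /(subsetP sIc); rewrite (negbTE eE').
have eAc : e \notin Ac by apply/negP => /(subsetP sAc); rewrite (negbTE eE').
have Me1 (Z : {set T}) : 1 <= r1 (e |: Z) by rewrite -E1; apply: R12; rewrite sub1set setU11.
have Me2 (Z : {set T}) : 1 <= r2 (e |: Z) by rewrite -E2; apply: R22; rewrite sub1set setU11.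
have r1Ic : r1 (e |: Ic) = #|e |: Ic|.
  by rewrite cardsU1 eIc; have := Me1 Ic; lia.
have r2Ic : r2 (e |: Ic) = #|e |: Ic|.
  by rewrite cardsU1 eIc; have := Me2 Ic; lia.
have cIc : #|e |: Ic| = #|Ic|.+1 by rewrite cardsU1 eIc.
set X := Ad :&: Ac.
set Y := e |: (Ad :|: Ac).
have h1 := R13 Ad (e |: Ac).
have eq1 : Ad :|: (e |: Ac) = Y.
  by apply/setP => x; rewrite !inE; case: (x == e); case: (x \in Ad); case: (x \in Ac).
have eq2 : Ad :&: (e |: Ac) = X.
  apply/setP => x; rewrite !inE; case: (eqVneq x e) => [->|_]; last by [].
  by rewrite (negbTE eAd).
rewrite eq1 eq2 in h1.
have h2 := R23 (E' :\: Ad) (e |: (E' :\: Ac)).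
have eq3 : (E' :\: Ad) :|: (e |: (E' :\: Ac)) = E :\: X.
  apply/setP => x; rewrite !inE; case: (eqVneq x e) => [->|_] /=; first by rewrite eE ?orbT ?andbT; case: (e \in Ad).
  by case: (x \in Ad); case: (x \in Ac); case: (x \in E).
have eq4 : (E' :\: Ad) :&: (e |: (E' :\: Ac)) = E :\: Y.
  apply/setP => x; rewrite !inE; case: (eqVneq x e) => [->|_] /=; first by rewrite ?(negbTE eAd) ?(negbTE eAc) ?eE ?eqxx /= ?andbF ?orbT.
  by case: (x \in Ad); case: (x \in Ac); case: (x \in E).
rewrite eq3 eq4 in h2.
have sX : X \subset E by apply: subset_trans (subsetIl _ _) sAdE.
have sY : Y \subset E.
  by rewrite subUset sub1set eE subUset sAdE (subset_trans sAc sE').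
have sIcE : e |: Ic \subset E by rewrite subUset sub1set eE (subset_trans sIc sE').
have sIdE : Id \subset E by apply: subset_trans sId sE'.
have m1 := Me1 Ac; have m2 := Me2 (E' :\: Ac).
case: (leqP #|Ic|.+1 #|Id|) => hI.
  case: (leqP (r1 X + r2 (E :\: X)) #|Id|) => hX.
    by exists Id, X; split.
  exists Id, Y; split => //; exact: (arith1 h1 h2 bd bc m1 m2 (leqnn _) hI hX).
case: (leqP (r1 X + r2 (E :\: X)) #|Ic|.+1) => hX.
  by exists (e |: Ic), X; split => //; rewrite cIc.
exists (e |: Ic), Y; split => //; rewrite cIc; exact: (arith1 h1 h2 bd bc m1 m2 (ltnW hI) (leqnn _) hX).
Qed.
End Rank.
Section MRank.
Variable N : finType.
Variable indep : pred {set N}.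
Hypothesis Hm : is_matroid indep.
Local Notation r := (mrank indep).

Lemma indep_le_rank (A B : {set N}) : B \subset A -> indep B -> #|B| <= r A.
Proof. by move=> sBA iB; rewrite /mrank; apply: leq_bigmax_cond; rewrite sBA. Qed.

Lemma rank_le_card (A : {set N}) : r A <= #|A|.
Proof. by apply/bigmax_leqP => B0 /andP [sBA _]; apply: subset_leq_card. Qed.

Lemma rank_ex (A : {set N}) : exists2 B : {set N}, (B \subset A) && indep B & #|B| = r A.
Proof.
case: Hm => i0 _ _.
have P0 : (set0 \subset A) && indep set0 by rewrite sub0set i0.
rewrite /mrank (@bigmax_eq_arg _ set0 (fun B => (B \subset A) && indep B) (fun B => #|B|) P0).
by case: arg_maxnP => // B PB _; exists B.
Qed.

Lemma rank_indep (A : {set N}) : r A = #|A| -> indep A.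
Proof.
case: (rank_ex A) => B /andP [sBA iB] <- cB.
suff -> : A = B by [].
by apply/eqP; rewrite eq_sym eqEcard sBA cB leqnn.
Qed.

Lemma maximal_rank (X K : {set N}) : K \subset X -> indep K ->
  (forall x, x \in X -> x \notin K -> ~~ indep (x |: K)) -> r X <= #|K|.
Proof.
move=> sKX iK mK; case: (rank_ex X) => B /andP [sBX iB] <-.
rewrite leqNgt; apply/negP => lt.
case: Hm => _ _ aug.
case: (aug K B iK iB lt) => x; rewrite inE => /andP [xK xB] ixK.
by have := mK x (subsetP sBX x xB) xK; rewrite ixK.
Qed.

Lemma mrank_fun : rank_fun r.
Proof.
split.
- by apply/eqP; rewrite -leqn0 -(cards0 N) rank_le_card.
- move=> A x; case: (rank_ex (x |: A)) => B /andP [sB iB] <-.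
  case: Hm => _ sub _.
  have iB' : indep (B :\ x) by apply: sub iB; apply: subsetDl.
  have sB' : B :\ x \subset A.
    apply/subsetP => y; rewrite !inE => /andP [yx yB].
    by move: (subsetP sB y yB); rewrite !inE (negbTE yx).
  have := indep_le_rank sB' iB'; rewrite (cardsD1 x B); case: (x \in B) => /=; lia.
- move=> A B sAB; case: (rank_ex A) => C /andP [sC iC] <-.
  by apply: indep_le_rank => //; apply: subset_trans sAB.
- move=> A B; case: (rank_ex (A :&: B)) => J /andP [sJ iJ] <-.
  case: Hm => i0 sub aug.
  set P := fun K : {set N} => [&& J \subset K, K \subset A :|: B & indep K].
  have PJ : P J by rewrite /P subxx iJ (subset_trans sJ) // subIset // subsetUl.
  case: (@arg_maxnP _ J P (fun K => #|K|) PJ) => K /and3P [sJK sK iK] maxK.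
  have rU : r (A :|: B) <= #|K|.
    apply: maximal_rank => // x xU xK; apply/negP => ixK.
    have := maxK (x |: K); rewrite /P ixK subUset sub1set xU sK.
    rewrite (subset_trans sJK (subsetUr _ _)) cardsU1 xK /= => /(_ isT).
    by rewrite ltnn.
  have rA : #|K :&: A| <= r A by apply: indep_le_rank; [apply: subsetIr | apply: sub iK; apply: subsetIl].
  have rB : #|K :&: B| <= r B by apply: indep_le_rank; [apply: subsetIr | apply: sub iK; apply: subsetIl].
  have cU := cardsUI (K :&: A) (K :&: B).
  have eK : (K :&: A) :|: (K :&: B) = K by rewrite -setIUr; apply/setIidPl.
  rewrite eK in cU.
  have cJ : #|J| <= #|(K :&: A) :&: (K :&: B)|.
    apply: subset_leq_card; rewrite !subsetI sJK (subset_trans sJ (subsetIl _ _)).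
    by rewrite (subset_trans sJ (subsetIr _ _)).
  lia.
Qed.
End MRank.

Lemma Dobj_le (N : finType) indep h (U V : {set N}) :
  (Dobj indep h U <= Dobj indep h V)%R = (#|U| + h * mrank indep V <= #|V| + h * mrank indep U)%N.
Proof. rewrite /Dobj; apply/idP/idP => H; lia. Qed.
Lemma Dobj_eq (N : finType) indep h (U V : {set N}) :
  (#|U| + h * mrank indep V = #|V| + h * mrank indep U)%N -> Dobj indep h U = Dobj indep h V.
Proof. rewrite /Dobj => H; lia. Qed.

Lemma sum_eq_pointwise n (f g : 'I_n -> nat) :
  (forall i, f i <= g i) -> \sum_(i < n) f i = \sum_(i < n) g i -> forall i, f i = g i.
Proof.
move=> le eq i; apply/eqP; rewrite eqn_leq le /=; rewrite leqNgt; apply/negP => lt.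
have : \sum_(j < n) f j < \sum_(j < n) g j.
  rewrite (bigD1 i) //= [X in _ < X](bigD1 i) //= -addSn; apply: leq_add lt _.
  by apply: leq_sum => j _; exact: le j.
by rewrite eq ltnn.
Qed.

Section Union.
Variable N : finType.
Variable indep : pred {set N}.
Hypothesis Hm : is_matroid indep.
Variable h : nat.
Local Notation r := (mrank indep).

Definition slice (A : {set N * 'I_h}) (i : 'I_h) : {set N} := [set x | (x, i) \in A].
Definition RS (A : {set N * 'I_h}) : nat := \sum_(i < h) r (slice A i).
Definition RP (A : {set N * 'I_h}) : nat := #|[set p.1 | p in A]|.

Lemma RS_fun : rank_fun RS.
Proof.
case: (mrank_fun Hm) => R0 R1 R2 R3.
split.
- rewrite /RS big1 // => i _.
  by have -> : slice set0 i = set0 by apply/setP => x; rewrite !inE.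
- move=> A [y j]; rewrite /RS (bigD1 j) //= [X in _ <= X.+1](bigD1 j) //=.
  have -> : slice ((y, j) |: A) j = y |: slice A j by apply/setP => x; rewrite !inE xpair_eqE eqxx andbT.
  rewrite (eq_bigr (fun i => r (slice A i))); first by have := R1 (slice A j) y; lia.
  move=> i ij; congr r; apply/setP => x; rewrite !inE xpair_eqE.
  by rewrite (negbTE ij) andbF.
- move=> A B sAB; apply: leq_sum => i _; apply: R2; apply/subsetP => x; rewrite !inE.
  exact: (subsetP sAB).
- move=> A B; rewrite /RS -!big_split /=; apply: leq_sum => i _.
  have -> : slice (A :|: B) i = slice A i :|: slice B i by apply/setP => x; rewrite !inE.
  have -> : slice (A :&: B) i = slice A i :&: slice B i by apply/setP => x; rewrite !inE.
  exact: R3.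
Qed.

Lemma RP_fun : rank_fun RP.
Proof.
split.
- by rewrite /RP imset0 cards0.
- by move=> A x; rewrite /RP imsetU1 cardsU1; case: (_ \notin _).
- by move=> A B sAB; rewrite /RP; apply: subset_leq_card; apply: imsetS.
- move=> A B; rewrite /RP imsetU -[#|[set p.1 | p in A]| + _]cardsUI leq_add2l; apply: subset_leq_card.
  by rewrite subsetI !imsetS // ?subsetIl ?subsetIr.
Qed.

Lemma card_slices (I : {set N * 'I_h}) : #|I| = \sum_(i < h) #|slice I i|.
Proof.
rewrite -sum1_card (partition_big (fun p : N * 'I_h => p.2) xpredT) //=.
apply: eq_bigr => i _; rewrite sum1dep_card.
have -> : [set x | (x \in I) && (x.2 == i)] = (fun y => (y, i)) @: slice I i.
  apply/setP => [[x j]]; rewrite !inE /=; apply/idP/imsetP.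
    by case/andP => xI /eqP eji; subst; exists x; rewrite ?inE.
  by case=> y; rewrite inE => yI [-> ->]; rewrite yI eqxx.
by apply: card_imset => a b [].
Qed.

Lemma union_ub (Q W : {set N}) :
  mrank (union_indep h indep) Q <= #|Q :\: W| + h * r W.
Proof.
apply/bigmax_leqP => J /andP [sJQ /existsP [F /andP [/forallP HF /eqP HJ]]].
rewrite -(cardsID W J).
have c1 : #|J :\: W| <= #|Q :\: W| by apply: subset_leq_card; apply: setSD.
suff c2 : #|J :&: W| <= h * r W by lia.
have s : J :&: W \subset \bigcup_(i < h) (F i :&: W).
  apply/subsetP => x; rewrite inE HJ => /andP [/bigcupP [i _ xi] xW].
  by apply/bigcupP; exists i => //; rewrite inE xi.
apply: leq_trans (subset_leq_card s) _.
have -> : h * r W = \sum_(i < h) r W by rewrite sum_nat_const card_ord.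
have : \sum_(i < h) #|F i :&: W| <= \sum_(i < h) r W.
  apply: leq_sum => i _; apply: indep_le_rank; first exact: subsetIr.
  case: Hm => _ sub _; apply: sub (HF i); exact: subsetIl.
apply: leq_trans.
elim/big_ind2: _ => //; first by rewrite cards0.
move=> A a B b hA hB; have := cardsUI a b; lia.
Qed.

Lemma union_lb (X : {set N}) : exists2 U : {set N}, U \subset X &
  #|X :\: U| + h * r U <= mrank (union_indep h indep) X.
Proof.
set E := [set p : N * 'I_h | p.1 \in X].
have [I [A [sIE sAE r1I r2I bnd]]] := inter_thm (erefl #|E|) RS_fun RP_fun.
have islice i : indep (slice I i).
  apply: rank_indep => //; move: i; apply: sum_eq_pointwise; first by move=> i; exact: rank_le_card.
  by rewrite -card_slices.
have uI : union_indep h indep [set p.1 | p in I].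
  apply/existsP; exists [ffun i => slice I i]; apply/andP; split.
    by apply/forallP => i; rewrite ffunE.
  apply/eqP/setP => x; apply/imsetP/bigcupP.
    by case=> [[y i]] yI ->; exists i => //; rewrite ffunE inE.
  by case=> i _; rewrite ffunE inE => xi; exists (x, i).
have sIX : [set p.1 | p in I] \subset X.
  by apply/subsetP => x /imsetP [p /(subsetP sIE)]; rewrite inE => ? ->.
have rh : #|I| <= mrank (union_indep h indep) X.
  rewrite -r2I /RP /mrank; apply: leq_bigmax_cond.
  by rewrite sIX uI.
set U := [set x in X | [forall i, (x, i) \in A]].
exists U; first by apply/subsetP => x; rewrite inE => /andP [].
apply: leq_trans rh; apply: leq_trans bnd; rewrite addnC; apply: leq_add.
  have -> : h * r U = \sum_(i < h) r U by rewrite sum_nat_const card_ord.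
  apply: leq_sum => i _.
  case: (mrank_fun Hm) => _ _ R2 _; apply: R2; apply/subsetP => x.
  by rewrite !inE => /andP [_ /forallP /(_ i)].
rewrite /RP; apply: subset_leq_card; apply/subsetP => x.
rewrite !inE negb_and => /andP [/orP [xX|nA] xX']; first by rewrite xX' in xX.
move: nA; rewrite negb_forall => /existsP [i ni].
by apply/imsetP; exists (x, i) => //; rewrite !inE xX' ni.
Qed.
End Union.

Theorem lemmaA1 (N : finType) (indep : pred {set N}) (h : nat)
  (Q : {set N}) (e : N) (D : {set N}) :
  is_matroid indep -> (1 <= h)%N ->
  e \notin Q ->
  mrank (union_indep h indep) (e |: Q) = mrank (union_indep h indep) Q ->
  is_D indep Q h D ->
  e \in mspan indep D.
Proof.
move=> Hm h1 eQ Hr [sDQ maxD maxlD].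
case: (mrank_fun Hm) => R0 R1 R2 R3.
set rh := mrank (union_indep h indep) Q.
have [U sUX hU] := union_lb Hm h (e |: Q).
rewrite Hr -/rh in hU.
case: (boolP (e \in U)) => eU; last first.
  have sUQ : U \subset Q.
    apply/subsetP => x xU; move: (subsetP sUX x xU); rewrite !inE.
    by case/orP => // /eqP xe; rewrite -xe xU in eU.
  have eq : (e |: Q) :\: U = e |: (Q :\: U).
    apply/setP => x; rewrite !inE; case: (eqVneq x e) => [->|] //=; by rewrite (negbTE eU).
  rewrite eq cardsU1 !inE (negbTE eQ) andbF /= in hU.
  have := union_ub Hm h Q U; rewrite -/rh; lia.
set U' := U :\ e.
have sU'Q : U' \subset Q.
  apply/subsetP => x; rewrite !inE => /andP [xe xU]; move: (subsetP sUX x xU); rewrite !inE.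
  by rewrite (negbTE xe).
have eqU : U = e |: U' by rewrite setD1K.
have eqD : (e |: Q) :\: U = Q :\: U'.
  apply/setP => x; rewrite !inE; case: (eqVneq x e) => [->|] //=; by rewrite eU (negbTE eQ).
rewrite eqD in hU.
have rU1 := R1 U' e; rewrite -eqU in rU1.
have rU2 : mrank indep U' <= mrank indep U by apply: R2; rewrite eqU subsetUr.
have hub := union_ub Hm h Q U'; rewrite -/rh in hub.
have hUD := union_ub Hm h Q D; rewrite -/rh in hUD.
case: (eqVneq (mrank indep U) (mrank indep U')) => rUeq; last first.
  have rU : mrank indep U = (mrank indep U').+1 by lia.
  rewrite rU mulnS in hU; lia.
rewrite rUeq in hU.
have cQU' : #|Q :\: U'| = #|Q| - #|U'| by rewrite cardsDS.
have cQD : #|Q :\: D| = #|Q| - #|D| by rewrite cardsDS.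
have cU'Q : #|U'| <= #|Q| by apply: subset_leq_card.
have cDQ : #|D| <= #|Q| by apply: subset_leq_card.
have m1 := maxD U' sU'Q; rewrite Dobj_le in m1.
have sUD : U' :|: D \subset Q by rewrite subUset sU'Q sDQ.
have sID : U' :&: D \subset Q by apply: subset_trans (subsetIr _ _) sDQ.
have m2 := maxD _ sUD; rewrite Dobj_le in m2.
have m3 := maxD _ sID; rewrite Dobj_le in m3.
have sm := R3 U' D.
have hsm : h * mrank indep (U' :|: D) + h * mrank indep (U' :&: D) <=
           h * mrank indep U' + h * mrank indep D by rewrite -!mulnDr leq_mul2l sm orbT.
have cm := cardsUI U' D.
have eUD : U' :|: D = D.
  apply: maxlD => //; last exact: subsetUr.
  apply: Dobj_eq; lia.
have sU'D : U' \subset D by rewrite -eUD subsetUl.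
rewrite inE; apply/eqP/anti_leq/andP; split; last by apply: R2; apply: subsetUr.
have := R3 (e |: U') D.
have -> : (e |: U') :|: D = e |: D by rewrite -setUA (setUidPr sU'D).
have : mrank indep U' <= mrank indep ((e |: U') :&: D).
  by apply: R2; rewrite subsetI subsetUr sU'D.
rewrite -eqU; lia.
Qed.
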